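(* Every connected (finite, simple) graph $G$ satisfies $\mathrm{rc}(G) \leq 3\,\mathrm{f}(G) - 1$.
   Context: For an edge-coloring of a graph $G$, a path is rainbow if no two of its edges have the same color; $G$ is rainbow-connected if every pair of vertices is joined by a rainbow path. The rainbow connection number $\mathrm{rc}(G)$ is the minimum number of colors in an edge-coloring making $G$ rainbow-connected. The forest number $\mathrm{f}(G)$ is the maximum number of vertices of an induced subgraph of $G$ that is a forest. *)

(* Defs.v *)
From mathcomp Require Import all_boot.
Set Implicit Arguments. Unset Strict Implicit. Unset Printing Implicit Defensive.

Definition simple_graph (T : finType) (e : rel T) : Prop :=
  symmetric e /\ irreflexive e.

Definition connected_graph (T : finType) (e : rel T) : Prop :=
  forall x y : T, connect e x y.

Definition walk_edges (T : Type) (x : T) (p : seq T) : seq (T * T) :=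
  zip (x :: p) p.

(* An edge-colouring with (at most) k colours: c u v is the colour of the
   edge uv; it must not depend on the orientation of the edge. *)
Definition edge_coloring (T : finType) (e : rel T) (k : nat)
  (c : T -> T -> 'I_k) : Prop :=
  forall u v, e u v -> c u v = c v u.

Definition rainbow_path (T : finType) (e : rel T) (k : nat)
  (c : T -> T -> 'I_k) (x y : T) (p : seq T) : bool :=
  [&& path e x p, uniq (x :: p), last x p == y &
      uniq [seq c uv.1 uv.2 | uv <- walk_edges x p]].

Definition rainbow_connected (T : finType) (e : rel T) (k : nat)
  (c : T -> T -> 'I_k) : Prop :=
  forall x y : T, exists p : seq T, rainbow_path e c x y p.

(* rc(G) <= m  iff some edge-colouring with at most m colours makes G
   rainbow-connected. *)
Definition rc_le (T : finType) (e : rel T) (m : nat) : Prop :=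
  exists k (c : T -> T -> 'I_k),
    k <= m /\ edge_coloring e c /\ rainbow_connected e c.

(* A cycle inside S: at least 3 distinct vertices of S, consecutive ones
   adjacent, last adjacent to first. *)
Definition cycle_in (T : finType) (e : rel T) (S : {set T}) (x : T)
  (p : seq T) : bool :=
  [&& 2 <= size p, uniq (x :: p), all (fun v => v \in S) (x :: p),
      path e x p & e (last x p) x].

Definition induced_forest (T : finType) (e : rel T) (S : {set T}) : Prop :=
  forall x p, ~~ cycle_in e S x p.

Definition is_forest_number (T : finType) (e : rel T) (f : nat) : Prop :=
  (exists S : {set T}, induced_forest e S /\ #|S| = f) /\
  (forall S : {set T}, induced_forest e S -> #|S| <= f).

(* Main.v *)
Require Import Defs.
From Stdlib Require Import Classical.
From mathcomp Require Import all_boot zify.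

Section Main.
Variable T : finType.
Variable e : rel T.
Hypothesis esym : symmetric e.
Hypothesis eirr : irreflexive e.

Definition cols (col : T -> T -> nat) (x : T) (p : seq T) :=
  [seq col uv.1 uv.2 | uv <- walk_edges x p].

Lemma cols_cons col x z p : cols col x (z :: p) = col x z :: cols col z p.
Proof. by []. Qed.

Lemma cols_rcons col x p z :
  cols col x (rcons p z) = rcons (cols col x p) (col (last x p) z).
Proof.
elim: p x => [|y p IH] x //=.
by rewrite cols_cons IH.
Qed.

Lemma cols_eq (D : {set T}) c1 c2 x p :
  (forall a b, a \in D -> b \in D -> c1 a b = c2 a b) ->
  x \in D -> all (fun v => v \in D) p -> cols c1 x p = cols c2 x p.
Proof.
move=> H; elim: p x => [|y p IH] x //= xD /andP[yD pD].
by rewrite !cols_cons H // IH.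
Qed.

Definition Inv (D : {set T}) (col : T -> T -> nat) :=
  (forall a b, col a b = col b a) /\
  forall x y, x \in D -> y \in D -> exists p,
    [/\ path e x p, uniq (x :: p), last x p = y, all (fun v => v \in D) p &
       uniq (cols col x p) && all (fun c => c < #|D|.-1) (cols col x p)].

Lemma Inv1 y : Inv [set y] (fun _ _ => 0).
Proof.
split=> // a b; rewrite !inE => /eqP -> /eqP ->; exists [::]; split => //.
Qed.

Lemma Inv_add D col u v : Inv D col -> v \notin D -> u \in D -> e u v ->
  exists col', Inv (v |: D) col'.
Proof.
move=> [csym H] vD uD euv.
set m := #|D|.-1.
have cD : #|D| = m.+1.
  have : 0 < #|D| by apply/card_gt0P; exists u.
  rewrite /m; lia.
have cD' : #|v |: D|.-1 = m.+1 by rewrite cardsU1 vD cD.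
pose col' a b := if ((a == v) && (b \in D)) || ((b == v) && (a \in D)) then m else col a b.
have agree : forall a b, a \in D -> b \in D -> col' a b = col a b.
  move=> a b aD bD; rewrite /col'.
  have va : (a == v) = false by apply/eqP => av; rewrite -av aD in vD.
  have vb : (b == v) = false by apply/eqP => bv; rewrite -bv bD in vD.
  by rewrite va vb.
exists col'; split.
  by move=> a b; rewrite /col' csym orbC.
move=> x y; rewrite !in_setU1 cD'.
have [->|xv] := eqVneq x v; have [->|yv] := eqVneq y v => //= xD yD.
- by exists [::]; split.
- have [p [pp up lp ap /andP[cu ca]]] := H u y uD yD.
  have vp : v \notin u :: p.
    apply/negP => /[dup] vin; rewrite inE => /orP[/eqP vu|vp'];
      first by rewrite vu uD in vD.
    by move/allP: ap => /(_ v vp'); rewrite (negbTE vD).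
  exists (u :: p); split => //.
  + by rewrite /= esym euv pp.
  + by rewrite /= vp.
  + by rewrite /= in_setU1 uD orbT; apply/allP => z zp; rewrite in_setU1 (allP ap z zp) orbT.
  + rewrite cols_cons (@cols_eq D _ col) //.
    have -> : col' v u = m by rewrite /col' eqxx uD.
    rewrite /= cu ltnSn /= andbT; apply/andP; split.
      by apply/negP => /(allP ca); rewrite ltnn.
    by apply/allP => c /(allP ca) /ltnW.
- have [p [pp up lp ap /andP[cu ca]]] := H x u xD uD.
  have vp : v \notin x :: p.
    apply/negP; rewrite inE => /orP[/eqP vx|vp']; first by rewrite vx xD in vD.
    by move/allP: ap => /(_ v vp'); rewrite (negbTE vD).
  exists (rcons p v); split => //.
  + by rewrite rcons_path pp lp euv.
  + move: up vp => /= /andP[xp up]; rewrite in_cons => /norP[_ vp].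
    by rewrite mem_rcons in_cons negb_or rcons_uniq xv xp vp up.
  + exact: last_rcons.
  + by rewrite all_rcons in_setU1 eqxx; apply/allP => z zp; rewrite in_setU1 (allP ap z zp) orbT.
  + rewrite cols_rcons (@cols_eq D _ col) // lp.
    have -> : col' u v = m by rewrite /col' eqxx uD orbT.
    rewrite rcons_uniq all_rcons ltnSn cu /= andbT; apply/andP; split.
      by apply/negP => /(allP ca); rewrite ltnn.
    by apply/allP => c /(allP ca) /ltnW.
- have [p [pp up lp ap /andP[cu ca]]] := H x y xD yD.
  exists p; split => //.
  + by apply/allP => z zp; rewrite in_setU1 (allP ap z zp) orbT.
  + rewrite (@cols_eq D _ col) // cu /=.
    by apply/allP => c /(allP ca) /ltnW.
Qed.

Variable F : {set T}.
Hypothesis Fforest : induced_forest e F.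
Hypothesis Fmax : forall S, induced_forest e S -> #|S| <= #|F|.

Lemma nbrs w : w \notin F -> exists a b, [/\ a \in F, b \in F, a != b, e w a & e w b].
Proof.
move=> wF.
have nf : ~ induced_forest e (w |: F).
  by move=> /Fmax; rewrite cardsU1 wF; lia.
suff H : forall x p, cycle_in e (w |: F) x p ->
   exists a b, [/\ a \in F, b \in F, a != b, e w a & e w b].
  apply: NNPP => Hn; apply: nf => x p; apply/negP => /H; exact: Hn.
move=> x p /and5P[sz un al pth lst].
have [win|wout] := boolP (w \in x :: p); last first.
  have : cycle_in e F x p.
    apply/and5P; split => //; apply/allP => z zin.
    have := allP al z zin; rewrite in_setU1 => /orP[/eqP zw|//].
    by rewrite -zw zin in wout.
  by move=> c; have := Fforest x p; rewrite c.
have cyc : cycle e (x :: p) by rewrite /= rcons_path pth lst.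
case: (rot_to win) => i q eq.
have cq : cycle e (w :: q) by rewrite -eq rot_cycle.
have uq : uniq (w :: q) by rewrite -eq rot_uniq.
have sq : size (w :: q) = size (x :: p) by rewrite -eq size_rot.
have memq : forall z, z \in w :: q -> z \in w |: F.
  by move=> z; rewrite -eq mem_rot => /(allP al).
case: q eq cq uq sq memq => [|a [|b' q'']] //= _.
1,2: by move=> _ _ [] sz'; rewrite -sz' in sz.
move=> cq uq sq memq.
set b := last b' q''.
move: cq => /and3P[ewa _]; rewrite rcons_path => /andP[_]; rewrite -/b => ebw.
have bin : b \in b' :: q'' by exact: mem_last.
move: uq => /and4P[]; rewrite !in_cons !negb_or => /and3P[wa wb' wq] /andP[ab' aq] _ _.
have ab : a != b.
  apply/eqP => abE; move: bin; rewrite -abE in_cons (negbTE ab') /=.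
  by rewrite (negbTE aq).
have bw : b != w.
  apply/eqP => bwE; move: bin; rewrite bwE in_cons (negbTE wb') /=.
  by rewrite (negbTE wq).
have aF : a \in F.
  by have := memq a; rewrite !inE eqxx orbT eq_sym (negbTE wa) /= => /(_ isT).
have bF : b \in F.
  have := memq b; rewrite !inE (negbTE bw) /=; apply.
  by move: bin; rewrite in_cons => ->; rewrite orbT.
by exists a, b; split => //; rewrite esym.
Qed.

Lemma Inv_add' (D : {set T}) u v : (exists col, Inv D col) -> v \notin D -> u \in D -> e u v ->
  exists col', Inv (v |: D) col'.
Proof. move=> [col I] vD uD euv; exact: (@Inv_add D col u v I vD uD euv). Qed.

Lemma cardIU1 v (D : {set T}) : v \notin D -> #|(v |: D) :&: F| = (v \in F) + #|D :&: F|.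
Proof.
move=> vD; case vF: (v \in F).
  have -> : (v |: D) :&: F = v |: (D :&: F).
    apply/setP => z; rewrite !inE; have [->|zv] := eqVneq z v; by rewrite /= ?eqxx ?vF.
  by rewrite cardsU1 inE (negbTE vD).
have -> : (v |: D) :&: F = D :&: F.
  apply/setP => z; rewrite !inE; have [->|zv] := eqVneq z v; by rewrite /= ?eqxx ?vF ?(negbTE vD) ?andbF.
by [].
Qed.

Lemma bdry (A : {set T}) x y : connect e x y -> x \in A -> y \notin A ->
  exists a b, [/\ a \in A, b \notin A & e a b].
Proof.
move=> /connectP[p pp ->]; elim: p x pp => [|z p IH] x /=; first by move=> _ ->.
move=> /andP[exz pp] xA lA.
have [zA|zA] := boolP (z \in A); first exact: (IH z pp zA lA).
by exists x, z.
Qed.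

Hypothesis conn : connected_graph e.

Definition Q (D : {set T}) := (exists col, Inv D col) /\ #|D| + 2 <= 3 * #|D :&: F|.

Lemma step (D : {set T}) : Q D -> ~~ (F \subset D) -> exists D', Q D' /\ #|D :&: F| < #|D' :&: F|.
Proof.
move=> [I cb] /subsetPn [y0 y0F y0D].
have [x0 x0D] : exists x0, x0 \in D.
  have : 0 < #|D :&: F| by lia.
  by move=> /card_gt0P[z]; rewrite inE => /andP[zD _]; exists z.
have [[d [y [dD yF yD edy]]]|nc1] :=
   classic (exists d y, [/\ d \in D, y \in F, y \notin D & e d y]).
  have I' := @Inv_add' D d y I yD dD edy.
  have c1 := @cardIU1 y D yD; have s1 := cardsU1 y D.
  rewrite yD yF /= in c1 s1.
  by exists (y |: D); split; [split; [exact: I' | lia] | lia].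
set N := [set v | (v \notin D) && [exists d, (d \in D) && e d v]].
have NF : forall v, v \in N -> v \notin F.
  move=> v; rewrite inE => /andP[vD /existsP[d /andP[dD edv]]].
  by apply/negP => vF; apply: nc1; exists d, v.
have y0A : y0 \notin D :|: N.
  by rewrite inE negb_or y0D /=; apply/negP => /NF; rewrite y0F.
have x0A : x0 \in D :|: N by rewrite inE x0D.
have [a [b [aA bA eab]]] := @bdry (D :|: N) x0 y0 (conn x0 y0) x0A y0A.
move: bA; rewrite inE negb_or => /andP[bD bN].
have aD : a \notin D.
  apply/negP => aD; move: bN; rewrite inE bD /= => /existsP; apply.
  by exists a; rewrite aD eab.
have aN : a \in N by move: aA; rewrite inE (negbTE aD).
have aF := NF a aN.
move: (aN); rewrite inE aD /= => /existsP[d /andP[dD eda]].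
have I1 := @Inv_add' D d a I aD dD eda.
have c1 := @cardIU1 a D aD.
have s1 := cardsU1 a D; rewrite aD /= in s1; rewrite (negbTE aF) /= in c1.
have bD1 : b \notin a |: D.
  rewrite in_setU1 negb_or bD andbT; apply/eqP => ba.
  by move: eab; rewrite ba eirr.
have I2 := @Inv_add' (a |: D) a b I1 bD1 (setU11 _ _) eab.
have c2 := @cardIU1 b (a |: D) bD1.
have s2 := cardsU1 b (a |: D); rewrite bD1 /= in s2.
have [bF|bF] := boolP (b \in F).
  rewrite bF /= in c2.
  by exists (b |: (a |: D)); split; [split; [exact: I2 | clear -c1 c2 s1 s2 cb; lia] | clear -c1 c2 s1 s2 cb; lia].
have [y [_ [yF _ _ eby _]]] := @nbrs b bF.
have yD : y \notin D.
  apply/negP => yD; move: bN; rewrite inE bD /= => /existsP; apply.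
  by exists y; rewrite yD esym eby.
have yD2 : y \notin b |: (a |: D).
  rewrite !in_setU1 !negb_or yD andbT; apply/andP; split; apply/eqP => yE.
    by rewrite -yE yF in bF.
  by rewrite -yE yF in aF.
have I3 := @Inv_add' (b |: (a |: D)) b y I2 yD2 (setU11 _ _) eby.
have c3 := @cardIU1 y (b |: (a |: D)) yD2.
have s3 := cardsU1 y (b |: (a |: D)); rewrite yD2 /= in s3.
rewrite (negbTE bF) /= in c2; rewrite yF /= in c3.
by exists (y |: (b |: (a |: D))); split; [split; [exact: I3 | clear -c1 c2 c3 s1 s2 s3 cb; lia] | clear -c1 c2 c3 s1 s2 s3 cb; lia].
Qed.

Lemma grow k : forall D, Q D -> #|F| - #|D :&: F| <= k -> exists D', Q D' /\ F \subset D'.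
Proof.
elim: k => [|k IH] D QD lek.
  have [FD|nFD] := boolP (F \subset D); first by exists D.
  have [D' [QD' lt]] := @step D QD nFD.
  have : #|D' :&: F| <= #|F| by apply: subset_leq_card; apply: subsetIr.
  lia.
have [FD|nFD] := boolP (F \subset D); first by exists D.
have [D' [QD' lt]] := @step D QD nFD.
apply: (IH D' QD').
have : #|D' :&: F| <= #|F| by apply: subset_leq_card; apply: subsetIr.
lia.
Qed.

Lemma single_forest t : induced_forest e [set t].
Proof.
move=> x [|a p] //=; apply/negP => /and5P[sz /andP[xn _] al _ _].
move: al => /= /and3P[]; rewrite !inE => /eqP xt /eqP a_t _.
by move: xn; rewrite xt a_t inE eqxx.
Qed.

Lemma getD (t : T) : exists D col, [/\ Inv D col, F \subset D & #|D| + 2 <= 3 * #|F|].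
Proof.
have F1 : 1 <= #|F| by have := @Fmax _ (single_forest t); rewrite cards1.
have [y yF] : exists y, y \in F by apply/card_gt0P.
have Q1 : Q [set y].
  split; first by exists (fun _ _ => 0); apply: Inv1.
  have -> : [set y] :&: F = [set y].
    by apply/setP => z; rewrite !inE; case: eqVneq => // ->.
  by rewrite cards1.
have [D [[[col I] cb] FD]] := @grow #|F| [set y] Q1 (leq_subr _ _).
exists D, col; split => //.
by rewrite (setIidPr FD) in cb.
Qed.

Lemma notin_path (D : {set T}) z x p : z \notin D -> x \in D ->
  all (fun v => v \in D) p -> z \notin x :: p.
Proof.
move=> zD xD ap; rewrite in_cons negb_or; apply/andP; split.
  by apply/eqP => zx; rewrite zx xD in zD.
by apply/negP => /(allP ap); rewrite (negbTE zD).
Qed.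

Lemma main (t : T) : exists k (c : T -> T -> 'I_k),
  k <= 3 * #|F| - 1 /\ edge_coloring e c /\ rainbow_connected e c.
Proof.
have [D [colD [[csym H] FD cb]]] := getD t.
set m := #|D|.-1.
set n := 3 * #|F| - 2.
have F1 : 1 <= #|F| by have := @Fmax _ (single_forest t); rewrite cards1.
have D1 : #|D| = m.+1 by rewrite /m prednK // (leq_trans F1 (subset_leq_card FD)).
have mn : m.+1 <= n by rewrite -D1 /n; clear -cb; lia.
have nbD : forall w, w \notin D -> exists a b, [/\ a \in D, b \in D, a != b, e w a & e w b].
  move=> w wD; have wF : w \notin F by apply/negP => /(subsetP FD); rewrite (negbTE wD).
  have [a [b [aF bF ab ea eb]]] := @nbrs w wF.
  by exists a, b; split => //; apply: (subsetP FD).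
pose na w := odflt w [pick a | (a \in D) && e w a].
pose nb w := odflt w [pick b | [&& b \in D, e w b & b != na w]].
have naP : forall w, w \notin D -> na w \in D /\ e w (na w).
  move=> w wD; rewrite /na; case: pickP => [a /andP[]|] //=.
  have [a [b [aD _ _ ea _]]] := nbD w wD.
  by move=> /(_ a); rewrite aD ea.
have nbP : forall w, w \notin D -> [/\ nb w \in D, e w (nb w) & nb w != na w].
  move=> w wD; rewrite /nb; case: pickP => [a /and3P[]|] //=.
  have [a [b [aD bD ab ea eb]]] := nbD w wD.
  move=> H0; have := H0 a; have := H0 b; rewrite aD ea bD eb /=.
  move=> /negbFE/eqP bE /negbFE/eqP aE.
  by rewrite aE bE eqxx in ab.
pose cn a b := if a \in D then (if b \in D then colD a b else (if a == na b then m else m.+1))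
               else (if b \in D then (if b == na a then m else m.+1) else 0).
have cnD : forall a b, a \in D -> b \in D -> cn a b = colD a b.
  by move=> a b aD bD; rewrite /cn aD bD.
pose c a b : 'I_n.+1 := inord (cn a b).
exists n.+1, c; split; first by rewrite /n; clear -F1; lia.
split.
  move=> u v _; rewrite /c; congr inord; rewrite /cn.
  case: (u \in D); case: (v \in D); [exact: csym | reflexivity | reflexivity | reflexivity].
suff R : forall x y, exists p, [/\ path e x p, uniq (x :: p), last x p = y,
     uniq (cols cn x p) & all (fun k => k <= n) (cols cn x p)].
  move=> x y; have [p [pp up lp ucp acp]] := R x y.
  exists p; apply/and4P; split => //; first by apply/eqP.
  have -> : [seq c uv.1 uv.2 | uv <- walk_edges x p] = map inord (cols cn x p).
    by rewrite /cols -map_comp.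
  rewrite map_inj_in_uniq // => i j /(allP acp) iL /(allP acp) jL eij.
  by rewrite -(@inordK n i) // -(@inordK n j) // eij.
have ltn_notin : forall L j, all (fun k => k < m) L -> m <= j -> j \notin L.
  move=> L j aL mj; apply/negP => /(allP aL) jm.
  by move: (leq_trans jm mj); rewrite ltnn.
have all_le : forall L, all (fun k => k < m) L -> all (fun k => k <= n) L.
  move=> L aL; apply/allP => k /(allP aL) km.
  exact: leq_trans (ltnW km) (ltnW mn).
have mle : m <= n := ltnW mn.
move=> x y.
case xD: (x \in D); case yD: (y \in D).
- have [p [pp up lp ap /andP[cu ca]]] := H x y xD yD.
  exists p; split => //; rewrite (@cols_eq D cn colD) //; exact: all_le.
- have [naD eyna] := naP y (negbT yD).
  have [p [pp up lp ap /andP[cu ca]]] := H x (na y) xD naD.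
  have cny : cn (na y) y = m by rewrite /cn naD yD eqxx.
  exists (rcons p y); split.
  + by rewrite rcons_path pp lp esym eyna.
  + have : uniq (rcons (x :: p) y) by rewrite rcons_uniq (@notin_path D _ _ _ (negbT yD) xD ap) up.
    by [].
  + exact: last_rcons.
  + rewrite cols_rcons (@cols_eq D cn colD) // lp cny rcons_uniq cu andbT.
    exact: ltn_notin.
  + by rewrite cols_rcons (@cols_eq D cn colD) // lp cny all_rcons mle all_le.
- have [naD exna] := naP x (negbT xD).
  have [p [pp up lp ap /andP[cu ca]]] := H (na x) y naD yD.
  have cnx : cn x (na x) = m by rewrite /cn naD xD eqxx.
  exists (na x :: p); split.
  + by rewrite /= exna pp.
  + by rewrite cons_uniq (@notin_path D _ _ _ (negbT xD) naD ap) up.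
  + by rewrite /= lp.
  + rewrite cols_cons (@cols_eq D cn colD) // cnx cons_uniq cu andbT.
    exact: ltn_notin.
  + by rewrite cols_cons (@cols_eq D cn colD) // cnx /= mle all_le.
- have [<-|xy] := eqVneq x y.
    by exists [::]; split.
  have [naD exna] := naP x (negbT xD).
  have [nbyD eynb nbna] := nbP y (negbT yD).
  have [p [pp up lp ap /andP[cu ca]]] := H (na x) (nb y) naD nbyD.
  have cnx : cn x (na x) = m by rewrite /cn naD xD eqxx.
  have cny : cn (nb y) y = m.+1 by rewrite /cn nbyD yD (negbTE nbna).
  exists (na x :: rcons p y); split.
  + by rewrite /= exna rcons_path pp lp esym eynb.
  + have : uniq (x :: rcons (na x :: p) y).
      rewrite cons_uniq mem_rcons in_cons negb_or xy (@notin_path D _ _ _ (negbT xD) naD ap).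
      by rewrite rcons_uniq (@notin_path D _ _ _ (negbT yD) naD ap) up.
    by [].
  + exact: last_rcons.
  + rewrite cols_cons cols_rcons (@cols_eq D cn colD) // lp cnx cny.
    rewrite cons_uniq mem_rcons in_cons negb_or rcons_uniq cu andbT.
    rewrite (ltn_notin _ _ ca (leqnn m)) (ltn_notin _ _ ca (leqnSn m)) andbT.
    by rewrite andbT neq_ltn ltnSn.
  + rewrite cols_cons cols_rcons (@cols_eq D cn colD) // lp cnx cny /= all_rcons.
    by rewrite mle mn all_le.
Qed.

End Main.

Theorem theorem2 (T : finType) (e : rel T) (f : nat) :
  0 < #|T| ->
  simple_graph e ->
  connected_graph e ->
  is_forest_number e f ->
  rc_le e (3 * f - 1).
Proof.
move=> T0 [esym eirr] conn [[F [Ff cF]] Fmax].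
have [t _] : exists t : T, true by move: T0 => /card_gt0P[t _]; exists t.
have Fmax' : forall S, induced_forest e S -> #|S| <= #|F|.
  by move=> S /Fmax; rewrite cF.
have [k [c [kle [ec rc]]]] := @main T e esym eirr F Ff Fmax' conn t.
by exists k, c; rewrite -cF.
Qed.
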